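(* If $D$ is an algebraic curve in $\mathbb{CP}^2$ of degree $d$, then for every $n\ge0$ the pullback $(R^n)^*D$ is a divisor of degree $d\cdot4^n$.
   Context: $R[U:V:W]=[(U^2+V^2)^2:V^2(U+W)^2:(V^2+W^2)^2]$ on $\mathbb{CP}^2$. For a rational map $S$ of $\mathbb{CP}^2$ with reduced homogeneous polynomial lift $\hat S$ (components without common factor) and a curve $D=\{p=0\}$ given by a homogeneous polynomial $p$, the pullback $S^*D$ is the divisor $\{p\circ\hat S=0\}$ counted with multiplicities; here $S=R^n$. *)

(* Defs.v *)
From HB Require Import structures.
From mathcomp Require Import all_boot all_order all_algebra.
From mathcomp Require Import mpoly.
From mathcomp Require Import complex.
Set Implicit Arguments. Unset Strict Implicit. Unset Printing Implicit Defensive.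
Import Order.TTheory GRing.Theory Num.Theory.
Local Open Scope ring_scope.

Section Defs.
Variable K : fieldType.

Definition cU : {mpoly K[3]} := 'X_(0 : 'I_3).
Definition cV : {mpoly K[3]} := 'X_(1 : 'I_3).
Definition cW : {mpoly K[3]} := 'X_(2 : 'I_3).

Definition Rhat : 3.-tuple {mpoly K[3]} :=
  [tuple (cU ^+ 2 + cV ^+ 2) ^+ 2; cV ^+ 2 * (cU + cW) ^+ 2; (cV ^+ 2 + cW ^+ 2) ^+ 2].

Definition idlift : 3.-tuple {mpoly K[3]} := [tuple cU; cV; cW].

(* composition of lifts: components of F o G are F_i(G_0,G_1,G_2) *)
Definition comp_lift (F G : 3.-tuple {mpoly K[3]}) : 3.-tuple {mpoly K[3]} :=
  [tuple of map (fun q => comp_mpoly G q) F].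

(* the naive (not necessarily reduced) polynomial lift of R^n : R^ o ... o R^ *)
Definition Rhat_iter (n : nat) : 3.-tuple {mpoly K[3]} :=
  iter n (comp_lift Rhat) idlift.

(* S is a homogeneous polynomial lift of the rational map represented by T:
   components homogeneous of a common degree, not all zero, and S and T
   define the same rational map (proportional triples). *)
Definition is_lift_of (T S : 3.-tuple {mpoly K[3]}) : Prop :=
  (exists e : nat, forall i : 'I_3, tnth S i \is e.-homog) /\
  (exists i : 'I_3, tnth S i != 0) /\
  (forall i j : 'I_3, tnth S i * tnth T j = tnth S j * tnth T i).

Definition no_common_factor (S : 3.-tuple {mpoly K[3]}) : Prop :=
  forall g : {mpoly K[3]},
    (forall i : 'I_3, exists q : {mpoly K[3]}, tnth S i = g * q) ->
    (msize g <= 1)%N.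

Definition reduced_lift_Rn (n : nat) (S : 3.-tuple {mpoly K[3]}) : Prop :=
  is_lift_of (Rhat_iter n) S /\ no_common_factor S.

(* the divisor {f = 0} (counted with multiplicities) of a nonzero homogeneous
   polynomial f has degree deg f = (msize f).-1; we record the divisor as the
   nonzero polynomial f and its degree as the total degree. *)
Definition divisor_degree (f : {mpoly K[3]}) : nat := (msize f).-1.

End Defs.

(* Main.v *)
Require Import Defs.
From HB Require Import structures.
From mathcomp Require Import all_boot all_order all_algebra.
From mathcomp Require Import mpoly.
From mathcomp Require Import complex.
From mathcomp Require Import ring.
Import Order.TTheory GRing.Theory Num.Theory.
Local Open Scope ring_scope.

Section Aux.
Variable K : fieldType.
Local Notation P := {mpoly K[3]}.

Definition subN (i : 'I_3) (N : nat) : 3.-tuple P :=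
  [tuple (if j == i then 0 else 'X_j ^+ N) | j < 3].

Lemma subN_X i N m : 'X_[m] \mPo subN i N = if m i == 0%N then 'X_[(m *+ N)%MM] else 0.
Proof.
rewrite comp_mpolyX mpolyXE_id (bigD1 i) //= tnth_mktuple eqxx expr0n.
case: eqP => [mi0|/eqP ne]; last by rewrite mul0r.
rewrite mul1r [in RHS](bigD1 i) //= mulmnE mi0 mul0n expr0 mul1r.
apply: eq_bigr => j /negbTE nij; rewrite tnth_mktuple nij mulmnE -exprM mulnC //.
Qed.

Lemma mcoeff_subN i N p k : (0 < N)%N ->
  (p \mPo subN i N)@_(k *+ N)%MM = if k i == 0%N then p@_k else 0.
Proof.
move=> N0.
have E : p@_k = \sum_(m <- msupp p) p@_m * (m == k)%:R.
  by rewrite {1}[p]mpolyE raddf_sum /=; apply: eq_bigr => m _; rewrite mcoeffZ mcoeffX.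
rewrite comp_mpolyEX raddf_sum /=.
have inj : forall m, ((m *+ N)%MM == (k *+ N)%MM) = (m == k).
  move=> m; apply/eqP/eqP => [/mnmP h|->//]; apply/mnmP => j.
  by have := h j; rewrite !mulmnE => /eqP; rewrite eqn_pmul2r // => /eqP.
case: (k i =P 0%N) => [ki0|kin0].
  rewrite E; apply: eq_bigr => m _; rewrite mcoeffZ subN_X.
  case: (m i =P 0%N) => [mi|mi]; first by rewrite mcoeffX inj.
  rewrite mcoeff0; case: (m =P k) => [mk|]; last by rewrite mulr0.
  by rewrite mk in mi.
apply: big1 => m _; rewrite mcoeffZ subN_X.
case: (m i =P 0%N) => [mi|mi]; last by rewrite mcoeff0 mulr0.
rewrite mcoeffX inj; case: (m =P k) => [mk|]; last by rewrite mulr0.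
by rewrite mk in mi.
Qed.

Definition Rs i (p : P) : P := p \mPo subN i 1.

Lemma mcoeff_Rs i p k : (Rs i p)@_k = if k i == 0%N then p@_k else 0.
Proof. by rewrite /Rs -{1}(mulm1n k) mcoeff_subN. Qed.


Lemma Rs_X i j : Rs i 'X_j = if j == i then 0 else 'X_j.
Proof. by rewrite /Rs subN_X mnm1E mulm1n; case: (j =P i). Qed.

Lemma Rs_id i p : Rs i (Rs i p) = Rs i p.
Proof. by apply/mpolyP => k; rewrite !mcoeff_Rs; case: eqP. Qed.

Definition Vquo i (p : P) : P :=
  \sum_(m <- msupp p) (if m i == 0%N then 0 else p@_m) *: 'X_[(m - U_(i))%MM].

Lemma Rs_split i p : p = Rs i p + 'X_i * Vquo i p.
Proof.
rewrite {1 2}[p]mpolyE /Rs /Vquo raddf_sum mulr_sumr -big_split /=.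
apply: eq_bigr => m _; rewrite linearZ /= subN_X mulm1n -scalerAr -mpolyXD.
case: eqP => [_|mi]; first by rewrite scale0r addr0.
rewrite scaler0 add0r addmC submK //; by rewrite lep1mP; apply/eqP.
Qed.

Lemma Rs_eq0 i p : Rs i p = 0 -> p = 'X_i * Vquo i p.
Proof. by move=> h; rewrite {1}(Rs_split i p) h add0r. Qed.

Lemma X_neq0 (j : 'I_3) : ('X_j : P) != 0.
Proof. by rewrite -msize_poly_eq0 msizeX mdeg1. Qed.

Lemma msize_Xi i (q : P) : q != 0 -> msize ('X_i * q) = (msize q).+1.
Proof. move=> q0; rewrite msizeM //; last exact: X_neq0. by rewrite mmeasureX /= mdeg1 add1n. Qed.

Lemma msize_Rs i p : (msize (Rs i p) <= msize p)%N.
Proof.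
rewrite [X in (X <= _)%N]msizeE; apply/bigmax_leqP_seq => m mP _.
apply: msize_mdeg_lt; move: mP; rewrite !mcoeff_msupp mcoeff_Rs.
case: (m i == 0%N) => //; by rewrite eqxx.
Qed.


Lemma RsM i p q : Rs i (p * q) = Rs i p * Rs i q.
Proof. exact: rmorphM. Qed.
Lemma RsD i p q : Rs i (p + q) = Rs i p + Rs i q.
Proof. exact: rmorphD. Qed.
Lemma RsB i p q : Rs i (p - q) = Rs i p - Rs i q.
Proof. exact: rmorphB. Qed.
Lemma RsXn i p k : Rs i (p ^+ k) = Rs i p ^+ k.
Proof. exact: rmorphXn. Qed.
Lemma Rs0 i : Rs i 0 = 0.
Proof. exact: rmorph0. Qed.


Lemma div_powX {i} {w : P} : w != 0 -> Rs i w = w -> forall N t s,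
  t * w = s * 'X_i ^+ N -> exists r, t = 'X_i ^+ N * r.
Proof.
move=> w0 Rw; elim=> [|N IH] t s e; first by exists t; rewrite expr0 mul1r.
have : Rs i t * w = 0.
  by rewrite -{1}Rw -RsM e RsM RsXn Rs_X eqxx expr0n /= mulr0.
move/eqP; rewrite mulf_eq0 (negbTE w0) orbF => /eqP /Rs_eq0 tq.
move: (Vquo i t) tq => q tq.
move: e; rewrite tq exprS => e.
have : (q * w) * 'X_i = (s * 'X_i ^+ N) * 'X_i.
  have -> : q * w * 'X_i = 'X_i * q * w by ring.
  by rewrite e; ring.
move=> /(mulIf (X_neq0 i)) /IH [r qr].
by exists r; rewrite qr mulrA.
Qed.

Lemma homog_msize_le d (p : P) : p \is d.-homog -> (msize p <= d.+1)%N.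
Proof.
move/dhomog_mf => h; rewrite msizeE; apply/bigmax_leqP_seq => m mP _.
by rewrite ltnS (h m mP).
Qed.

Arguments homog_msize_le {d p}.

Lemma homog_msize d (p : P) : p != 0 -> p \is d.-homog -> msize p = d.+1.
Proof.
move=> p0 /dhomog_mf h; rewrite -mlead_deg // (h _ (mlead_supp p0)) //.
Qed.


Lemma compX (j : 'I_3) (lq : 3.-tuple P) : 'X_j \mPo lq = tnth lq j.
Proof. by rewrite comp_mpolyXU (tnth_nth 0). Qed.

Local Notation F n := (Rhat_iter K n).
Local Notation i0 := (0 : 'I_3).
Local Notation i1 := (1 : 'I_3).
Local Notation i2 := (2 : 'I_3).

Lemma F_S0 n : tnth (F n.+1) i0 = (tnth (F n) i0 ^+ 2 + tnth (F n) i1 ^+ 2) ^+ 2.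
Proof.
rewrite /Rhat_iter iterS /comp_lift tnth_map /= -/(Rhat_iter K n).
by rewrite (tnth_nth 0) /= /cU /cV rmorphXn rmorphD !rmorphXn /= !compX.
Qed.

Lemma F_S1 n : tnth (F n.+1) i1 =
  tnth (F n) i1 ^+ 2 * (tnth (F n) i0 + tnth (F n) i2) ^+ 2.
Proof.
rewrite /Rhat_iter iterS /comp_lift tnth_map /= -/(Rhat_iter K n).
by rewrite (tnth_nth 0) /= /cU /cV /cW rmorphM !rmorphXn rmorphD /= !compX.
Qed.

Lemma F_S2 n : tnth (F n.+1) i2 = (tnth (F n) i1 ^+ 2 + tnth (F n) i2 ^+ 2) ^+ 2.
Proof.
rewrite /Rhat_iter iterS /comp_lift tnth_map /= -/(Rhat_iter K n).
by rewrite (tnth_nth 0) /= /cW /cV rmorphXn rmorphD !rmorphXn /= !compX.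
Qed.

Lemma F_0 (j : 'I_3) : tnth (F 0) j = 'X_j.
Proof. by rewrite /Rhat_iter /= /idlift; case: j => [[|[|[|]]] ?] //=; rewrite (tnth_nth 0) /=. Qed.


Lemma hom_conv d1 d2 (p : P) : p \is d1.-homog -> d1 = d2 -> p \is d2.-homog.
Proof. by move=> h <-. Qed.
Arguments hom_conv {d1 d2 p}.

Lemma F_homog n j : tnth (F n) j \is (4 ^ n).-homog.
Proof.
elim: n j => [|n IH] j.
  by rewrite F_0 expn0 dhomogX; apply/eqP; apply: mdeg1.
have h0 := IH i0; have h1 := IH i1; have h2 := IH i2.
case: j => [[|[|[|//]]] Hj].
- have -> : Ordinal Hj = i0 by apply: val_inj.
  rewrite F_S0; apply: (hom_conv (dhomogMn _ (dhomogD (dhomogMn _ h0) (dhomogMn _ h1)))).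
  by rewrite expnSr -mulnA.
- have -> : Ordinal Hj = i1 by apply: val_inj.
  rewrite F_S1; apply: (hom_conv (dhomogM (dhomogMn 2 h1) (dhomogMn 2 (dhomogD h0 h2)))).
  by rewrite expnSr -mulnDr.
- have -> : Ordinal Hj = i2 by apply: val_inj.
  rewrite F_S2; apply: (hom_conv (dhomogMn _ (dhomogD (dhomogMn _ h1) (dhomogMn _ h2)))).
  by rewrite expnSr -mulnA.
Qed.

Lemma F_Rs n : [/\ Rs i1 (tnth (F n) i0) = 'X_i0 ^+ (4 ^ n),
  Rs i1 (tnth (F n) i1) = 0 & Rs i1 (tnth (F n) i2) = 'X_i2 ^+ (4 ^ n)].
Proof.
elim: n => [|n [h0 h1 h2]].
  by rewrite !F_0 !Rs_X /= expn0 !expr1.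
rewrite F_S0 F_S1 F_S2 !(RsXn, RsM, RsD) h0 h1 h2 expnSr.
by rewrite !expr0n /= mul0r !addr0 add0r -!exprM !mulnA.
Qed.

Lemma pow4_gt0 n : (0 < 4 ^ n)%N.
Proof. by rewrite expn_gt0. Qed.

Lemma XN_neq0 (j : 'I_3) N : ('X_j : P) ^+ N != 0.
Proof. exact: expf_neq0 (X_neq0 j). Qed.

Lemma F1_neq0 n : tnth (F n) i1 != 0.
Proof.
elim: n => [|n IH]; first by rewrite F_0 X_neq0.
rewrite F_S1 mulf_neq0 ?expf_neq0 //; apply/eqP => e.
have [h0 _ h2] := F_Rs n.
have := congr1 (Rs i0) (congr1 (Rs i1) e).
rewrite !Rs0 RsD h0 h2 RsD !RsXn !Rs_X /= expr0n eqn0Ngt pow4_gt0 /= add0r.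
by move/eqP; rewrite (negbTE (XN_neq0 _ _)).
Qed.


Lemma msize_XN (j : 'I_3) N : msize (('X_j : P) ^+ N) = N.+1.
Proof. by rewrite mpolyXn mmeasureX /= mdegMn mdeg1 mul1n. Qed.

Lemma KL n M (T : 'I_3 -> P) :
  (forall j, msize (T j) <= M)%N ->
  (forall i j, T i * tnth (F n) j = T j * tnth (F n) i) ->
  exists l, forall j, T j = l * tnth (F n) j.
Proof.
elim: M T => [|M IH] T hs hr.
  exists 0 => j; rewrite mul0r; apply/eqP; rewrite -msize_poly_eq0.
  by rewrite -leqn0 hs.
set N := (4 ^ n)%N.
have [h0 h1 h2] := F_Rs n.
have e02 : Rs i1 (T i0) * 'X_i2 ^+ N = Rs i1 (T i2) * 'X_i0 ^+ N.
  by rewrite -h0 -h2 -!RsM hr.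
have t1 : Rs i1 (T i1) = 0.
  have := congr1 (Rs i1) (hr i1 i0); rewrite !RsM h1 h0 mulr0 => /eqP.
  by rewrite mulf_eq0 (negbTE (XN_neq0 _ _)) orbF => /eqP.
have Rw : Rs i0 ('X_i2 ^+ N) = 'X_i2 ^+ N by rewrite RsXn Rs_X.
have [r t0] := div_powX (XN_neq0 i2 N) Rw N _ _ e02.

have t2 : Rs i1 (T i2) = r * 'X_i2 ^+ N.
  apply: (mulIf (XN_neq0 i0 N)); rewrite -e02 t0; ring.
have Rr : Rs i1 r = r.
  apply: (mulfI (XN_neq0 i0 N)); rewrite -t0 -(Rs_id i1 (T i0)) t0.
  by rewrite RsM RsXn Rs_X.
pose D j := T j - r * tnth (F n) j.
have RD : forall j, Rs i1 (D j) = 0.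
  move=> j; rewrite /D RsB RsM Rr.
  case: j => [[|[|[|//]]] Hj].
  - have -> : Ordinal Hj = i0 by apply: val_inj.
    by rewrite t0 h0 mulrC subrr.
  - have -> : Ordinal Hj = i1 by apply: val_inj.
    by rewrite t1 h1 mulr0 subrr.
  - have -> : Ordinal Hj = i2 by apply: val_inj.
    by rewrite t2 h2 subrr.
pose T' j := Vquo i1 (D j).
have DT : forall j, D j = 'X_i1 * T' j by move=> j; apply: Rs_eq0.
have msr : r != 0 -> (msize r + N <= M.+1)%N.
  move=> r0; have := leq_trans (msize_Rs i1 (T i0)) (hs i0).
  by rewrite t0 msizeM ?XN_neq0 // msize_XN addSn /= addnC.
have msD : forall j, (msize (D j) <= M.+1)%N.
  move=> j; apply: leq_trans (msizeD_le _ _) _; rewrite geq_max hs msizeN /=.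
  have [->|r0] := eqVneq r 0; first by rewrite mul0r msize0.
  have [->|f0] := eqVneq (tnth (F n) j) 0; first by rewrite mulr0 msize0.
  rewrite msizeM //; apply: leq_trans _ (msr r0).
  have := homog_msize_le (F_homog n j); rewrite -/N => hF.
  by rewrite -subn1 leq_subLR add1n -addnS leq_add2l.
have [l hl] : exists l, forall j, T' j = l * tnth (F n) j.
  apply: IH.
  - move=> j; have [->|q0] := eqVneq (T' j) 0; first by rewrite msize0.
    by have := msD j; rewrite DT msize_Xi.
  - move=> i j; apply: (mulfI (X_neq0 i1)); rewrite !mulrA -!DT /D.
    rewrite !mulrBl hr; ring.
exists (r + 'X_i1 * l) => j.
have := DT j; rewrite /D hl => /eqP; rewrite subr_eq => /eqP ->; ring.
Qed.


Lemma Rs_comp i (p : P) (lq : 3.-tuple P) :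
  Rs i (p \mPo lq) = p \mPo [tuple Rs i (tnth lq j) | j < 3].
Proof.
rewrite /Rs (comp_mpolyEX p lq) (comp_mpolyEX p [tuple _ | j < 3]) raddf_sum; apply: eq_bigr => m _.
rewrite /= comp_mpolyZ !comp_mpolyX rmorph_prod; congr (_ *: _).
by apply: eq_bigr => j _; rewrite rmorphXn tnth_mktuple.
Qed.

Lemma RsF n : [tuple Rs i1 (tnth (F n) j) | j < 3] = subN i1 (4 ^ n).
Proof.
have [h0 h1 h2] := F_Rs n.
apply: eq_from_tnth => j; rewrite !tnth_mktuple.
case: j => [[|[|[|//]]] Hj].
- by have -> : Ordinal Hj = i0 by apply: val_inj.
- by have -> : Ordinal Hj = i1 by apply: val_inj.
- by have -> : Ordinal Hj = i2 by apply: val_inj.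
Qed.

Lemma F_nz n (p : P) : p != 0 -> p \mPo F n != 0.
Proof.
have [k] := ubnP (msize p); elim: k p => // k IH p hk p0.
have [Rp0|Rpn0] := eqVneq (Rs i1 p) 0.
  have e := Rs_eq0 _ _ Rp0; set q := Vquo i1 p in e.
  have q0 : q != 0 by apply: contraNneq p0 => q0; rewrite e q0 mulr0.
  rewrite e rmorphM /= compX; apply: mulf_neq0; first exact: F1_neq0.
  apply: IH => //; by move: hk; rewrite {1}e msize_Xi.
set m := mlead (Rs i1 p).
have : (Rs i1 p)@_m != 0 by rewrite mleadc_eq0.
rewrite mcoeff_Rs; case: (m i1 =P 0%N) => [mi pm|_]; last by rewrite eqxx.
apply/eqP => h; move: pm; have := congr1 (fun q => (Rs i1 q)@_(m *+ 4 ^ n)%MM) h.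
by rewrite /= Rs_comp RsF mcoeff_subN ?pow4_gt0 // mi eqxx mcoeff_Rs mulmnE mi mul0n eqxx mcoeff0 => ->; rewrite eqxx.
Qed.


Lemma comp_homog d N (p : P) (lq : 3.-tuple P) : p \is d.-homog ->
  (forall j, tnth lq j \is N.-homog) -> p \mPo lq \is (d * N).-homog.
Proof.
move=> hp hl; rewrite comp_mpolyEX big_seq; apply: rpred_sum => m mP; apply: rpredZ.
rewrite comp_mpolyX !big_ord_recl big_ord0 mulr1.
apply: (hom_conv (dhomogM (dhomogMn _ (hl _)) (dhomogM (dhomogMn _ (hl _)) (dhomogMn _ (hl _))))).
rewrite -(dhomog_mf hp mP) /= mdegE !big_ord_recl big_ord0 addn0.
by rewrite !(mulnC N) -!mulnDl.
Qed.

Lemma comp_scale d (p : P) (lq lq' : 3.-tuple P) c : p \is d.-homog ->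
  (forall j, tnth lq' j = c%:MP * tnth lq j) -> p \mPo lq' = c ^+ d *: (p \mPo lq).
Proof.
move=> hp hl; rewrite !comp_mpolyEX scaler_sumr !big_seq; apply: eq_bigr => m mP.
rewrite !comp_mpolyX scalerA mulrC -scalerA; congr (_ *: _).
under eq_bigr => j _ do rewrite hl exprMn.
rewrite big_split /= prodrXr -mdegE (dhomog_mf hp mP) -rmorphXn /=.
by rewrite mul_mpolyC.
Qed.

End Aux.


Theorem corollary4p5 (R : rcfType) (d : nat) (p : {mpoly R[i][3]}) :
  (0 < d)%N -> p != 0 -> p \is d.-homog ->
  forall (n : nat) (S : 3.-tuple {mpoly R[i][3]}),
    reduced_lift_Rn n S ->
    comp_mpoly S p != 0 /\ divisor_degree (comp_mpoly S p) = (d * 4 ^ n)%N.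
Proof.
move=> d0 p0 hp n S [[_ [[i Si] hrel]] hnc].
have [l hl] := @KL _ n (\max_(j < 3) msize (tnth S j)) (tnth S)
   (fun j => leq_bigmax j) hrel.
have := hnc l (fun j => ex_intro _ _ (hl j)) => /msize1_polyC lc.
set c := l@_0 in lc.
have c0 : c != 0.
  apply: contraNneq Si => c0; rewrite hl lc c0 mpolyC0 mul0r //.
have e : comp_mpoly S p = c ^+ d *: comp_mpoly (Rhat_iter _ n) p.
  by apply: comp_scale hp _ => j; rewrite hl lc.
have nz := F_nz _ n _ p0.
have hom := @comp_homog _ _ _ _ _ hp (F_homog _ n).
rewrite e; split; first by rewrite mscalerI negb_or expf_neq0.
by rewrite /divisor_degree msizeZ ?expf_neq0 // (homog_msize _ _ _ nz hom).
Qed.
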